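(* Let $\mathcal T$ be a finite trajectory set, $\mathcal Z$ a finite context set, $u:\mathcal T\times\mathcal Z\to\mathbb R$, $z_k\in\mathcal Z$, $\epsilon\in[0,1]$, and $P'(z)=(1-\epsilon)\mathbb I\{z=z_k\}+\epsilon R(z)$ for some distribution $R$ on $\mathcal Z$. Let $BC(\tau)=BC_{\delta_{z_k}}(\tau)=\frac1{|\mathcal T|}\sum_{\tau'\in\mathcal T}O_u(\tau,\tau',z_k)$ and $BC'(\tau)=BC_{P'}(\tau)$. For $\alpha'>0$ define distributions on $\mathcal T$ by $p_{z_k}(\tau)=\exp(BC(\tau)/\alpha')/Z$ and $q_{z_k}(\tau)=\exp(BC'(\tau)/\alpha')/Z'$ with $Z=\sum_\tau\exp(BC(\tau)/\alpha')$, $Z'=\sum_\tau\exp(BC'(\tau)/\alpha')$. Then $$\mathrm{KL}(p_{z_k}\,\|\,q_{z_k})\le\frac{\epsilon^2}{2\alpha'^2}.$$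
   Context: $O_u(a,b,z)=\tfrac12$ if $u(a,z)=u(b,z)$, $1$ if $u(a,z)>u(b,z)$, $0$ otherwise. For a distribution $P$ on $\mathcal Z$, $BC_P(a)=\frac{1}{|\mathcal T|}\sum_{b\in\mathcal T}\mathbb E_{z\sim P}[O_u(a,b,z)]$; $\delta_{z_k}$ is the point mass at $z_k$. Interpretation: $p_{z_k}$ approximates the maximum-entropy optimal trajectory distribution (temperature $\alpha'$) for $u(\cdot,z_k)$ and $q_{z_k}$ that for the learned utility trained on data whose contexts follow $P'$, with $\epsilon$ the misassignment probability of the encoder. *)

(* Defs.v *)
From mathcomp Require Import all_boot all_order all_algebra.
From mathcomp Require Import reals.
From mathcomp Require Import sequences exp.
Set Implicit Arguments. Unset Strict Implicit. Unset Printing Implicit Defensive.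
Import Order.TTheory GRing.Theory Num.Theory.
Local Open Scope ring_scope.

Section Defs.
Variables (R : realType) (T Z : finType).

Definition Ou (u : T -> Z -> R) (a b : T) (z : Z) : R :=
  if u a z == u b z then 2^-1 else if u b z < u a z then 1 else 0.

Definition BC (u : T -> Z -> R) (P : Z -> R) (a : T) : R :=
  #|T|%:R^-1 * \sum_(b : T) \sum_(z : Z) P z * Ou u a b z.

Definition dirac_pt (zk : Z) (z : Z) : R := (z == zk)%:R.

Definition mixP (eps : R) (zk : Z) (Rd : Z -> R) (z : Z) : R :=
  (1 - eps) * (z == zk)%:R + eps * Rd z.

Definition gibbs (alpha : R) (f : T -> R) (t : T) : R :=
  expR (f t / alpha) / \sum_(t' : T) expR (f t' / alpha).

Definition is_distr (P : Z -> R) : Prop :=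
  (forall z, 0 <= P z) /\ \sum_(z : Z) P z = 1.

Definition KL (p q : T -> R) : R := \sum_(t : T) p t * ln (p t / q t).

End Defs.

(* Main.v *)
Require Import Defs.
From mathcomp Require Import all_boot all_order all_algebra.
From mathcomp Require Import reals.
From mathcomp Require Import sequences exp.
From mathcomp Require Import boolp classical_sets topology normedtype derive realfun.
From mathcomp Require Import ring lra.
Import Order.TTheory GRing.Theory Num.Theory.
Import numFieldNormedType.Exports.
Local Open Scope ring_scope.

Section S.
Variable R : realType.
Implicit Types (f g : R -> R) (x df dg : R).

Lemma dD {f g x df dg} : is_derive x 1 f df -> is_derive x 1 g dg ->
  is_derive x 1 (fun y => f y + g y) (df + dg).
Proof. move=> H1 H2; exact: (is_deriveD H1 H2). Qed.

Lemma dM {f g x df dg} : is_derive x 1 f df -> is_derive x 1 g dg ->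
  is_derive x 1 (fun y => f y * g y) (f x * dg + g x * df).
Proof. move=> H1 H2; exact: (is_deriveM H1 H2). Qed.

Lemma dC (k : R) x : is_derive x 1 (fun _ : R => k) 0.
Proof. exact: is_derive_cst. Qed.

Lemma dId x : is_derive x 1 (fun y : R => y) 1.
Proof. exact: is_derive_id. Qed.

Lemma dE x : is_derive x 1 (fun y : R => expR y) (expR x).
Proof. exact: is_derive_expR. Qed.

Lemma dV {f x df} : is_derive x 1 f df -> f x != 0 ->
  is_derive x 1 (fun y => (f y)^-1) (- (f x) ^- 2 * df).
Proof.
move=> H fx0; apply: DeriveDef; first exact: derivableV.
by rewrite deriveV // derive_val.
Qed.

Lemma dLn {f x df} : is_derive x 1 f df -> 0 < f x ->
  is_derive x 1 (fun y => ln (f y)) ((f x)^-1 * df).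
Proof.
move=> H fx0.
have df1 : derivable f x 1 by [].
have dl : derivable (@ln R) (f x) 1 by apply: ex_derive; exact: is_derive1_ln.
have dcomp : derivable (@ln R \o f) x 1.
  apply/derivable1_diffP; apply: differentiable_comp.
  - exact/derivable1_diffP.
  - exact/derivable1_diffP.
apply: DeriveDef; first exact: dcomp.
rewrite -derive1E (derive1_comp df1 dl) !derive1E.
have L := is_derive1_ln fx0.
by rewrite !derive_val.
Qed.

Lemma dN {f x df} : is_derive x 1 f df -> is_derive x 1 (fun y => - f y) (- df).
Proof. move=> H; exact: (is_deriveN H). Qed.

Lemma Dpos (th y : R) : 0 <= th <= 1 -> 0 < 1 - th + th * expR y.
Proof.
case/andP=> t0 t1; have e0 := expR_gt0 y.
case: (ltrP th 1) => ht.
  have : 0 <= th * expR y by apply: mulr_ge0 => //; exact: ltW.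
  lra.
have -> : th = 1 by apply/eqP; rewrite eq_le t1 ht.
by rewrite subrr add0r mul1r.
Qed.

Lemma hD (th y : R) : is_derive y 1 (fun y => 1 - th + th * expR y) (th * expR y).
Proof.
have H := (dD (dC (1 - th) y) (dM (dC th y) (dE y))). apply: (is_derive_eq H).
by rewrite mulr0 addr0 add0r.
Qed.

Lemma key (th h : R) : 0 <= th <= 1 -> 0 <= h ->
  1 - th + th * expR h <= expR (th * h + h * h / 8).
Proof.
move=> th01 h0.
have Dp := fun y => Dpos th y th01.
have Dn y : 1 - th + th * expR y != 0 by rewrite gt_eqF.
set G1 := fun y => y / 4 + th - 1 + (1 - th) * (1 - th + th * expR y)^-1.
set G := fun y => th * y + y * y / 8 - ln (1 - th + th * expR y).
have dG1 (y : R) : is_derive y 1 G1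
   (4^-1 - (1 - th) * ((1 - th + th * expR y) ^- 2 * (th * expR y))).
  have H := (dD (dD (dD (dM (dId y) (dC 4^-1 y)) (dC th y)) (dC (-1) y))
            (dM (dC (1 - th) y) (dV (hD th y) (Dn y)))).
  apply: (is_derive_eq H).
  rewrite /=; ring.
have dG (y : R) : is_derive y 1 G (G1 y).
  have H := (dD (dD (dM (dC th y) (dId y)) (dM (dM (dId y) (dId y)) (dC 8^-1 y)))
            (dN (dLn (hD th y) (Dp y)))).
  apply: (is_derive_eq H).
  rewrite /G1 /=.
  have := Dn y; set d := 1 - th + th * expR y => dn.
  have -> : th * expR y = d - (1 - th) by rewrite /d; ring.
  field; exact: dn.
have G2ge (y : R) : 0 <= 4^-1 - (1 - th) * ((1 - th + th * expR y) ^- 2 * (th * expR y)).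
  have := Dn y; have := Dp y; set d := 1 - th + th * expR y => dp dn.
  have : 4 * ((1 - th) * (th * expR y)) <= d ^+ 2.
    have : 0 <= ((1 - th) - th * expR y) ^+ 2 by apply: sqr_ge0.
    rewrite /d; nra.
  move=> H.
  have d2 : 0 < d ^+ 2 by apply: exprn_gt0.
  rewrite subr_ge0.
  have -> : (1 - th) * (d ^- 2 * (th * expR y)) = ((1 - th) * (th * expR y)) / d ^+ 2.
    by rewrite mulrCA mulrC.
  rewrite ler_pdivrMr //; nra.
have G1mono : forall x y, 0 <= x -> x <= y -> y <= h -> G1 x <= G1 y.
  apply: ger0_derive1_ndecr.
  - by move=> x _; exact: ex_derive.
  - by move=> x _; rewrite derive1E derive_val.
  - by apply: derivable_within_continuous => x _; exact: ex_derive.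
have G10 : G1 0 = 0.
  by rewrite /G1 expR0 mulr1 subrK invr1 mulr1 mul0r add0r; ring.
have Gmono : forall x y, 0 <= x -> x <= y -> y <= h -> G x <= G y.
  apply: ger0_derive1_ndecr.
  - by move=> x _; exact: ex_derive.
  - move=> x; rewrite in_itv /= => /andP[x0 xh].
    rewrite derive1E derive_val -G10; apply: G1mono; lra.
  - by apply: derivable_within_continuous => x _; exact: ex_derive.
have G00 : G 0 = 0.
  rewrite /G expR0 mulr1 subrK ln1; ring.
have := Gmono 0 h (lexx 0) h0 (lexx h).
rewrite G00 /G subr_ge0 -ler_expR lnK //; exact: Dp.
Qed.

Lemma chord (a b x : R) : a <= x <= b ->
  (b - a) * expR x <= (b - x) * expR a + (x - a) * expR b.
Proof.
case/andP=> ax xb.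
have E1 : expR x * (1 + (a - x)) <= expR a.
  have -> : expR a = expR x * expR (a - x) by rewrite -expRD; congr expR; ring.
  by rewrite ler_pM2l ?expR_gt0 // expR_ge1Dx.
have E2 : expR x * (1 + (b - x)) <= expR b.
  have -> : expR b = expR x * expR (b - x) by rewrite -expRD; congr expR; ring.
  by rewrite ler_pM2l ?expR_gt0 // expR_ge1Dx.
have h1 : 0 <= b - x by lra.
have h2 : 0 <= x - a by lra.
nra.
Qed.

Lemma hoeff (T : finType) (p X : T -> R) (a b : R) :
  (forall t, 0 <= p t) -> \sum_t p t = 1 -> a <= b ->
  (forall t, a <= X t <= b) ->
  \sum_t p t * expR (X t) <= expR (\sum_t p t * X t + (b - a) * (b - a) / 8).
Proof.
move=> p0 p1 ab Xab.
set m := \sum_t p t * X t.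
have ma : a <= m.
  rewrite -[a]mul1r -p1 mulr_suml; apply: ler_sum => t _.
  by apply: ler_wpM2l => //; case/andP: (Xab t).
have mb : m <= b.
  rewrite -[b]mul1r -p1 mulr_suml; apply: ler_sum => t _.
  by apply: ler_wpM2l => //; case/andP: (Xab t).
have [eab|ltab] := eqVneq a b.
  subst b.
  have Xa t : X t = a by apply/eqP; rewrite eq_le; case/andP: (Xab t) => -> ->.
  have -> : m = a by rewrite /m (eq_bigr (fun t => a * p t)) -?mulr_sumr ?p1 ?mulr1 // => t _; rewrite Xa mulrC.
  rewrite (eq_bigr (fun t => expR a * p t)) -?mulr_sumr ?p1 ?mulr1; last by move=> t _; rewrite Xa mulrC.
  by rewrite subrr mul0r mul0r addr0.
have hpos : 0 < b - a by rewrite subr_gt0 lt_def eq_sym ltab ab.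
have S1 : (b - a) * \sum_t p t * expR (X t) <= (b - m) * expR a + (m - a) * expR b.
  have -> : (b - m) * expR a + (m - a) * expR b =
      \sum_t p t * ((b - X t) * expR a + (X t - a) * expR b).
    have -> : \sum_t p t * ((b - X t) * expR a + (X t - a) * expR b) =
      \sum_t ((b * expR a - a * expR b) * p t + (expR b - expR a) * (p t * X t)).
      by apply: eq_bigr => t _; ring.
    by rewrite big_split /= -!mulr_sumr p1 /m; ring.
  rewrite mulr_sumr; apply: ler_sum => t _.
  by rewrite mulrCA; apply: ler_wpM2l => //; apply: chord.
set th := (m - a) / (b - a).
have th01 : 0 <= th <= 1.
  apply/andP; split; first by apply: divr_ge0; lra.
  by rewrite ler_pdivrMr // mul1r; lra.
have K := @key th (b - a) th01 (ltW hpos).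
have S2 : (b - m) * expR a + (m - a) * expR b
    = (b - a) * expR a * (1 - th + th * expR (b - a)).
  rewrite /th; have -> : expR b = expR a * expR (b - a) by rewrite -expRD; congr expR; ring.
  field; lra.
have S3 : expR (m + (b - a) * (b - a) / 8)
    = expR a * expR (th * (b - a) + (b - a) * (b - a) / 8).
  rewrite -expRD; congr expR; rewrite /th; field; lra.
rewrite S3 -(ler_pM2l hpos); apply: (le_trans S1); rewrite S2 -mulrA.
by rewrite ler_pM2l // ler_pM2l ?expR_gt0.
Qed.
End S.

Lemma Ou01 {R : realType} {T Z : finType} (u : T -> Z -> R) a b z :
  0 <= Ou u a b z <= 1.
Proof.
rewrite /Ou; case: ifP => _; first by apply/andP; split; [|rewrite invf_le1]; lra.
by case: ifP => _; lra.
Qed.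

Lemma BC01 {R : realType} {T Z : finType} (u : T -> Z -> R) (P : Z -> R) a :
  is_distr P -> 0 <= BC u P a <= 1.
Proof.
case=> P0 P1; rewrite /BC.
have inner b : 0 <= \sum_z P z * Ou u a b z <= 1.
  apply/andP; split.
    by apply: sumr_ge0 => z _; apply: mulr_ge0 => //; case/andP: (Ou01 u a b z).
  rewrite -P1; apply: ler_sum => z _; rewrite -[leRHS]mulr1.
  by apply: ler_wpM2l => //; case/andP: (Ou01 u a b z).
have S0 : 0 <= \sum_b \sum_z P z * Ou u a b z.
  by apply: sumr_ge0 => b _; case/andP: (inner b).
have S1 : \sum_b \sum_z P z * Ou u a b z <= #|T|%:R.
  rewrite -sum1_card natr_sum; apply: ler_sum => b _; by case/andP: (inner b).
apply/andP; split; first by apply: mulr_ge0 => //; rewrite invr_ge0.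
have [n0|n0] := eqVneq (#|T|%:R : R) 0.
  by rewrite n0 invr0 mul0r.
apply: (le_trans (ler_wpM2l _ S1)); first by rewrite invr_ge0.
by rewrite mulVf.
Qed.

Lemma BC_mix {R : realType} {T Z : finType} (u : T -> Z -> R) zk eps Rd a :
  BC u (mixP eps zk Rd) a = (1 - eps) * BC u (dirac_pt R zk) a + eps * BC u Rd a.
Proof.
rewrite /BC /mixP /dirac_pt.
have -> : \sum_b \sum_z ((1 - eps) * (z == zk)%:R + eps * Rd z) * Ou u a b z =
   (1 - eps) * \sum_b \sum_z (z == zk)%:R * Ou u a b z +
   eps * \sum_b \sum_z Rd z * Ou u a b z.
  rewrite !mulr_sumr -big_split; apply: eq_bigr => b _.
  rewrite !mulr_sumr -big_split; apply: eq_bigr => z _.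
  by rewrite mulrDl !mulrA.
ring.
Qed.

Lemma dirac_distr (R : realType) {Z : finType} (zk : Z) : is_distr (dirac_pt R zk).
Proof.
split; first by move=> z; rewrite /dirac_pt ler0n.
rewrite (bigD1 zk) //= /dirac_pt eqxx big1 ?addr0 // => z /negbTE -> //.
Qed.

Lemma sum_gt0 {R : realType} {T : finType} {F : T -> R} (t0 : T) :
  (forall t, 0 < F t) -> 0 < \sum_t F t.
Proof.
move=> H; rewrite (bigD1 t0) //=.
have : 0 <= \sum_(t | t != t0) F t by apply: sumr_ge0 => t _; exact: ltW.
have := H t0; lra.
Qed.

Theorem mainTheorem7 (R : realType) (T Z : finType) (u : T -> Z -> R)
  (zk : Z) (eps : R) (Rd : Z -> R) (alpha : R) :
  0 <= eps <= 1 -> is_distr Rd -> 0 < alpha ->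
  KL (gibbs alpha (BC u (dirac_pt R zk)))
     (gibbs alpha (BC u (mixP eps zk Rd)))
  <= eps ^+ 2 / (2 * alpha ^+ 2).
Proof.
move=> /andP[e0 e1] Rdd a0.
have rhs0 : 0 <= eps ^+ 2 / (2 * alpha ^+ 2).
  by apply: divr_ge0; [apply: sqr_ge0 | apply: mulr_ge0 => //; apply: sqr_ge0].
case: (pickP (fun _ : T => true)) => [t0 _|none]; last first.
  by rewrite /KL big1 // => t _; move: (none t).
set f := BC u (dirac_pt R zk).
set g := BC u (mixP eps zk Rd).
set X := fun t => (g t - f t) / alpha.
set c := eps / alpha.
have an0 : alpha != 0 by rewrite gt_eqF.
have hg t : g t / alpha = f t / alpha + X t by rewrite /X; field.
have Xb t : - c <= X t <= c.
  have := BC01 u _ t (dirac_distr R zk); have := BC01 u _ t Rdd.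
  rewrite /X /g BC_mix -/f /c => /andP[r0 r1] /andP[f0 f1].
  have -> : ((1 - eps) * f t + eps * BC u Rd t - f t) / alpha
     = eps * (BC u Rd t - f t) / alpha by field.
  rewrite !ler_pdivrMr // ler_pdivlMr //.
  rewrite mulNr divfK //.
  apply/andP; split; nra.
set Zf := \sum_t expR (f t / alpha).
set Zg := \sum_t expR (g t / alpha).
have Zf0 : 0 < Zf by apply: (sum_gt0 t0) => t; exact: expR_gt0.
have Zg0 : 0 < Zg by apply: (sum_gt0 t0) => t; exact: expR_gt0.
set p := gibbs alpha f.
have pE t : p t = expR (f t / alpha) / Zf by [].
have p0 t : 0 <= p t by rewrite pE divr_ge0 // ltW // expR_gt0.
have p1 : \sum_t p t = 1.
  by rewrite (eq_bigr _ (fun t _ => pE t)) -mulr_suml mulfV // gt_eqF.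
set S := \sum_t p t * expR (X t).
have ZgE : Zg = Zf * S.
  rewrite /S mulr_sumr; apply: eq_bigr => t _.
  rewrite hg expRD pE; field; rewrite gt_eqF //.
have S0 : 0 < S by rewrite -(pmulr_rgt0 _ Zf0) -ZgE.
have KLE : KL p (gibbs alpha g) = ln S - \sum_t p t * X t.
  rewrite /KL.
  have -> : \sum_t p t * ln (p t / gibbs alpha g t)
      = \sum_t (ln S * p t - p t * X t).
    apply: eq_bigr => t _.
    have -> : p t / gibbs alpha g t = S * expR (- X t).
      rewrite pE /gibbs -/Zg hg expRD expRN ZgE; field.
      by rewrite !gt_eqF ?expR_gt0.
    rewrite lnM ?posrE ?expR_gt0 // expRK; ring.
  by rewrite big_split /= -mulr_sumr p1 mulr1 sumrN.
rewrite KLE.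
have cge : - c <= c by have := Xb t0; case/andP=> ? ?; lra.
have H := @hoeff R T p X (- c) c p0 p1 cge Xb.
rewrite lerBlDl; apply: (le_trans (_ : ln S <= \sum_t p t * X t + (c - - c) * (c - - c) / 8)).
  by rewrite -ler_expR lnK ?posrE.
rewrite /c; apply: lerD => //; rewrite le_eqVlt; apply/orP; left; apply/eqP; field; exact: an0.
Qed.
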